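(* Let $S$ be a set of $n=5$ points all lying on a circle $\Gamma$ with center $O$, such that $\Gamma=$ SEC$(S)$, no two points of $S$ are antipodal on $\Gamma$, and no isometry of the plane other than the identity maps $S$ onto itself. Then there exist distinct $p,q\in S$ such that SED$(S\setminus\{p\})=$ SED$(S)$ and the antipodal point $q'$ of $q$ on $\Gamma$ lies in the open arc of $\Gamma$ that contains $p$ and whose endpoints are the two points of $S$ adjacent to $p$ in the cyclic order around $O$.
   Context: SED$(X)$ is the smallest closed disk containing a finite set $X$, and SEC$(X)$ is its boundary circle. Two points of $\Gamma$ are antipodal if the segment joining them passes through $O$. *)

(* Defs.v *)
From Stdlib Require Import Reals List.
Open Scope R_scope.

Definition pt : Type := (R * R)%type.

Definition dist2 (x y : pt) : R :=
  (fst x - fst y) ^ 2 + (snd x - snd y) ^ 2.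

Definition pdist (x y : pt) : R := sqrt (dist2 x y).

Definition encloses (X : pt -> Prop) (c : pt) (r : R) : Prop :=
  0 <= r /\ forall x, X x -> pdist x c <= r.

(* (c, r) is SED(X): an enclosing closed disk of minimum radius.
   (SED(X) is unique, so "SED(Y) = SED(X)" is expressed as: the disk
   SED(X) is a smallest enclosing disk of Y.) *)
Definition is_SED (X : pt -> Prop) (c : pt) (r : R) : Prop :=
  encloses X c r /\ forall c' r', encloses X c' r' -> r <= r'.

Definition setof (S : list pt) : pt -> Prop := fun x => In x S.

Definition setminus1 (S : list pt) (p : pt) : pt -> Prop :=
  fun x => In x S /\ x <> p.

Definition on_segment (O x y : pt) : Prop :=
  exists t, 0 <= t <= 1 /\
    O = ((1 - t) * fst x + t * fst y, (1 - t) * snd x + t * snd y).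

(* x, y on Gamma are antipodal: the segment joining them passes through O. *)
Definition antipodal (O x y : pt) : Prop := on_segment O x y.

Definition antipode (O q : pt) : pt := (2 * fst O - fst q, 2 * snd O - snd q).

Definition isometry (f : pt -> pt) : Prop :=
  forall x y, pdist (f x) (f y) = pdist x y.

Definition maps_onto_itself (f : pt -> pt) (S : list pt) : Prop :=
  (forall x, In x S -> In (f x) S) /\
  (forall y, In y S -> exists x, In x S /\ f x = y).

Definition cross (a b x : pt) : R :=
  (fst b - fst a) * (snd x - snd a) - (snd b - snd a) * (fst x - fst a).

(* x lies on the open arc of the circle (center O, radius r) with
   endpoints a and b that contains p: x is on the circle and strictly on
   the same side of the chord ab as p. *)
Definition in_open_arc (O : pt) (r : R) (a b p x : pt) : Prop :=
  pdist x O = r /\ 0 < cross a b x * cross a b p.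

(* a and b are the two points of S adjacent to p in the cyclic order
   around O: they are distinct points of S other than p, and the open arc
   with endpoints a, b containing p contains no point of S other than p. *)
Definition adjacent_pair (S : list pt) (O : pt) (r : R) (p a b : pt) : Prop :=
  In a S /\ In b S /\ a <> p /\ b <> p /\ a <> b /\
  forall s, In s S -> in_open_arc O r a b p s -> s = p.

(* Main.v *)
Require Import Defs.
From Stdlib Require Import Reals List Lra Lia Psatz Sorted Permutation Classical.
Open Scope R_scope.

Section G.
Variables (O : pt) (r : R).

Definition P (t : R) : pt := (fst O + r * cos t, snd O + r * sin t).

Lemma P_per t : P (t + 2*PI) = P t.
Proof. unfold P. rewrite cos_plus, sin_plus, cos_2PI, sin_2PI. f_equal; ring. Qed.

Lemma antipode_P t : antipode O (P t) = P (t - PI).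
Proof. unfold antipode, P; cbn [fst snd]. rewrite cos_minus, sin_minus, cos_PI, sin_PI. f_equal; ring. Qed.

Lemma dist2_P t : dist2 (P t) O = r^2.
Proof. unfold dist2, P; cbn [fst snd]. pose proof (sin2_cos2 t) as H. unfold Rsqr in H.
  replace ((fst O + r * cos t - fst O) ^ 2 + (snd O + r * sin t - snd O) ^ 2)
    with (r^2 * (sin t * sin t + cos t * cos t)) by ring. rewrite H; ring. Qed.

Lemma pdist_P (hr : 0 <= r) t : pdist (P t) O = r.
Proof. unfold pdist; rewrite dist2_P; apply sqrt_pow2; auto. Qed.

Lemma sin_sum_id u w : sin (2*u) + sin (2*w) - sin (2*u + 2*w) = 4 * sin u * sin w * sin (u+w).
Proof.
  rewrite sin_plus with (x := 2*u), !sin_2a, !cos_2a, sin_plus.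
  pose proof (sin2_cos2 u) as Hu. pose proof (sin2_cos2 w) as Hw. unfold Rsqr in *.
  set (su := sin u) in *. set (cu := cos u) in *. set (sw := sin w) in *. set (cw := cos w) in *.
  apply Rminus_diag_uniq.
  replace (2 * su * cu + 2 * sw * cw -
   (2 * su * cu * (cw * cw - sw * sw) + (cu * cu - su * su) * (2 * sw * cw)) -
   4 * su * sw * (su * cw + cu * sw))
  with (2*su*cu*(1 - (sw*sw + cw*cw)) + 2*sw*cw*(1 - (su*su+cu*cu))) by ring.
  rewrite Hu, Hw. ring.
Qed.

Lemma cross_P a b c : cross (P a) (P b) (P c) = r^2 * (sin (b-a) + sin (c-b) - sin (c-a)).
Proof. unfold cross, P; simpl; rewrite !sin_minus; ring. Qed.

Lemma cross_pos (hr : 0 < r) a b c : a < b -> b < c -> c < a + 2*PI -> 0 < cross (P a) (P b) (P c).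
Proof.
  intros h1 h2 h3. rewrite cross_P.
  pose proof PI_RGT_0.
  replace (sin (b - a) + sin (c - b) - sin (c - a)) with
    (sin (2*((b-a)/2)) + sin (2*((c-b)/2)) - sin (2*((b-a)/2) + 2*((c-b)/2))).
  2:{ f_equal; [f_equal; f_equal; field | f_equal; field]. }
  rewrite sin_sum_id.
  assert (0 < sin ((b-a)/2)) by (apply sin_gt_0; lra).
  assert (0 < sin ((c-b)/2)) by (apply sin_gt_0; lra).
  assert (0 < sin ((b-a)/2 + (c-b)/2)) by (apply sin_gt_0; lra).
  apply Rmult_lt_0_compat. nra.
  repeat apply Rmult_lt_0_compat; lra.
Qed.

Lemma cross_swap x y z : cross x y z = - cross x z y.
Proof. unfold cross; ring. Qed.
Lemma cross_self1 x y : cross x y x = 0.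
Proof. unfold cross; ring. Qed.
Lemma cross_self2 x y : cross x y y = 0.
Proof. unfold cross; ring. Qed.

Lemma min_pos (f : pt -> R) l : (forall s, In s l -> 0 < f s) ->
  exists m, 0 < m /\ forall s, In s l -> m <= f s.
Proof.
  induction l as [|a l IH]; intros H.
  - exists 1; split; [lra| intros s []].
  - destruct IH as [m [Hm Hm']]. { intros; apply H; right; auto. }
    exists (Rmin (f a) m). split. apply Rmin_pos; auto. apply H; left; auto.
    intros s [<-|Hs]. apply Rmin_l. eapply Rle_trans; [apply Rmin_r | auto].
Qed.

Lemma dist2_nonneg x y : 0 <= dist2 x y.
Proof. unfold dist2; apply Rplus_le_le_0_compat; apply pow2_ge_0. Qed.

Lemma pdist_le x c r' : pdist x c <= r' -> dist2 x c <= r'^2.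
Proof.
  unfold pdist; intros H. pose proof (dist2_nonneg x c).
  pose proof (sqrt_pos (dist2 x c)). pose proof (sqrt_sqrt (dist2 x c) H0). nra.
Qed.

Lemma noHalf S (hr : 0 < r) u1 u2 : u1^2 + u2^2 = 1 -> is_SED (setof S) O r ->
  (exists s, In s S) -> (forall s, In s S -> dist2 s O = r^2) ->
  (forall s, In s S -> 0 < (fst s - fst O)*u1 + (snd s - snd O)*u2) -> False.
Proof.
  intros Hu [_ Hmin] [s0 Hs0] Hd Hpos.
  destruct (min_pos _ S Hpos) as [m [Hm Hm']].
  set (c := (fst O + m*u1, snd O + m*u2)).
  assert (Hdc: forall s, In s S -> dist2 s c <= r^2 - m^2).
  { intros s Hs. specialize (Hd s Hs). specialize (Hm' s Hs). unfold dist2 in *; unfold c; cbn [fst snd].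
    replace ((fst s - (fst O + m * u1)) ^ 2 + (snd s - (snd O + m * u2)) ^ 2) with
      (((fst s - fst O)^2 + (snd s - snd O)^2) - 2*m*((fst s - fst O)*u1 + (snd s - snd O)*u2) + m^2*(u1^2+u2^2)) by ring.
    rewrite Hd, Hu. nra. }
  assert (H0 : 0 <= r^2 - m^2) by (pose proof (dist2_nonneg s0 c); pose proof (Hdc s0 Hs0); lra).
  assert (H1 : r <= sqrt (r^2 - m^2)).
  { apply (Hmin c). split. apply sqrt_pos. intros x Hx. unfold pdist. apply sqrt_le_1_alt. apply Hdc; auto. }
  assert (H2 : sqrt (r^2 - m^2) < sqrt (r^2)) by (apply sqrt_lt_1_alt; split; nra).
  rewrite sqrt_pow2 in H2 by lra. lra.
Qed.

Lemma arc_contra S (hr : 0 < r) lo w : w < PI -> is_SED (setof S) O r -> (exists s, In s S) ->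
  (forall s, In s S -> exists t, s = P t /\ lo <= t <= lo + w) -> False.
Proof.
  intros Hw HS Hne Hin.
  apply (noHalf S hr (cos (lo + w/2)) (sin (lo + w/2))); auto.
  - pose proof (sin2_cos2 (lo + w/2)). unfold Rsqr in H. lra.
  - intros s Hs. destruct (Hin s Hs) as [t [-> _]]. apply dist2_P.
  - intros s Hs. destruct (Hin s Hs) as [t [-> Ht]]. unfold P; cbn [fst snd].
    replace ((fst O + r * cos t - fst O) * cos (lo + w / 2) + (snd O + r * sin t - snd O) * sin (lo + w / 2))
      with (r * cos (t - (lo + w/2))) by (rewrite cos_minus; ring).
    apply Rmult_lt_0_compat; auto. apply cos_gt_0; lra.
Qed.

Lemma antip_P a : antipodal O (P a) (P (a + PI)).
Proof.
  unfold antipodal, on_segment. exists (1/2). split; [lra|].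
  unfold P; cbn [fst snd]. rewrite neg_cos, neg_sin.
  apply injective_projections; simpl; field.
Qed.

Lemma dist2_Pc t c' : dist2 (P t) c' = r^2 - 2*r*(cos t * (fst c' - fst O) + sin t * (snd c' - snd O))
   + ((fst c' - fst O)^2 + (snd c' - snd O)^2).
Proof.
  unfold dist2, P; cbn [fst snd]. pose proof (sin2_cos2 t) as H. unfold Rsqr in H.
  apply Rminus_diag_uniq.
  match goal with |- ?L - ?R = 0 => replace (L - R) with (r^2*(sin t * sin t + cos t * cos t - 1)) by ring end.
  rewrite H; ring.
Qed.

Lemma tri_lb (hr : 0 < r) a b c c' r' : a < b -> b < c -> c < a + 2*PI -> b - a < PI -> c - b < PI ->
  a + 2*PI - c < PI -> 0 <= r' -> pdist (P a) c' <= r' -> pdist (P b) c' <= r' -> pdist (P c) c' <= r' ->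
  r <= r'.
Proof.
  intros h1 h2 h3 h4 h5 h6 hr' da db dc.
  apply pdist_le in da; apply pdist_le in db; apply pdist_le in dc.
  rewrite dist2_Pc in da, db, dc.
  pose proof PI_RGT_0.
  assert (Wa : 0 < sin (c - b)) by (apply sin_gt_0; lra).
  assert (Wc : 0 < sin (b - a)) by (apply sin_gt_0; lra).
  assert (Wb : 0 < sin (a - c)).
  { replace (sin (a - c)) with (sin (a + 2*PI - c)).
    apply sin_gt_0; lra.
    replace (a + 2*PI - c) with ((a - c) + 2*PI) by ring. rewrite sin_plus, cos_2PI, sin_2PI; ring. }
  assert (Ix : sin (c - b) * cos a + sin (a - c) * cos b + sin (b - a) * cos c = 0)
    by (rewrite !sin_minus; ring).
  assert (Iy : sin (c - b) * sin a + sin (a - c) * sin b + sin (b - a) * sin c = 0)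
    by (rewrite !sin_minus; ring).
  set (v1 := fst c' - fst O) in *. set (v2 := snd c' - snd O) in *.
  set (wa := sin (c - b)) in *. set (wb := sin (a - c)) in *. set (wc := sin (b - a)) in *.
  assert (Hsum : wa * (r ^ 2 - 2 * r * (cos a * v1 + sin a * v2) + (v1 ^ 2 + v2 ^ 2))
     + wb * (r ^ 2 - 2 * r * (cos b * v1 + sin b * v2) + (v1 ^ 2 + v2 ^ 2))
     + wc * (r ^ 2 - 2 * r * (cos c * v1 + sin c * v2) + (v1 ^ 2 + v2 ^ 2))
     = (wa + wb + wc) * (r^2 + v1^2 + v2^2)).
  { replace (wa * (r ^ 2 - 2 * r * (cos a * v1 + sin a * v2) + (v1 ^ 2 + v2 ^ 2))
     + wb * (r ^ 2 - 2 * r * (cos b * v1 + sin b * v2) + (v1 ^ 2 + v2 ^ 2))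
     + wc * (r ^ 2 - 2 * r * (cos c * v1 + sin c * v2) + (v1 ^ 2 + v2 ^ 2)))
    with ((wa + wb + wc) * (r^2 + v1^2 + v2^2) - 2*r*v1*(wa * cos a + wb * cos b + wc * cos c)
          - 2*r*v2*(wa * sin a + wb * sin b + wc * sin c)) by ring.
    rewrite Ix, Iy; ring. }
  assert (E1 : wa * (r ^ 2 - 2 * r * (cos a * v1 + sin a * v2) + (v1 ^ 2 + v2 ^ 2)) <= wa * r'^2) by nra.
  assert (E2 : wb * (r ^ 2 - 2 * r * (cos b * v1 + sin b * v2) + (v1 ^ 2 + v2 ^ 2)) <= wb * r'^2) by nra.
  assert (E3 : wc * (r ^ 2 - 2 * r * (cos c * v1 + sin c * v2) + (v1 ^ 2 + v2 ^ 2)) <= wc * r'^2) by nra.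
  assert (E : (wa + wb + wc) * (r^2 + v1^2 + v2^2) <= (wa + wb + wc) * r'^2) by lra.
  assert (E' : r^2 + v1^2 + v2^2 <= r'^2).
  { apply Rmult_le_reg_l with (wa + wb + wc); lra. }
  nra.
Qed.

End G.

Section H.
Variables (O : pt) (r : R).

Definition ang (x : pt) : R :=
  if Rle_dec 0 (snd x - snd O) then acos ((fst x - fst O)/r) else 2*PI - acos ((fst x - fst O)/r).

Lemma ang_spec (hr : 0 < r) x : dist2 x O = r^2 -> x = P O r (ang x) /\ 0 <= ang x < 2*PI.
Proof.
  intros Hd. unfold ang.
  set (u := (fst x - fst O)/r). set (v := (snd x - snd O)/r).
  assert (Huv : u^2 + v^2 = 1).
  { replace (u^2 + v^2) with (dist2 x O / r^2) by (unfold u, v, dist2; field; lra).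
    rewrite Hd; field; lra. }
  assert (Hu : -1 <= u <= 1) by nra.
  assert (Hx1 : fst x = fst O + r*u) by (unfold u; field; lra).
  assert (Hx2 : snd x = snd O + r*v) by (unfold v; field; lra).
  assert (E : 1 - u² = v²) by (unfold Rsqr; nra).
  pose proof PI_RGT_0.
  destruct (Rle_dec 0 (snd x - snd O)) as [Hv|Hv].
  - assert (0 <= v) by (unfold v; apply Rmult_le_pos; [lra | left; apply Rinv_0_lt_compat; lra]).
    split.
    + unfold P; apply injective_projections; cbn [fst snd].
      rewrite cos_acos; lra.
      rewrite sin_acos, E, sqrt_Rsqr; lra.
    + pose proof (acos_bound u); lra.
  - assert (v < 0).
    { unfold v. apply Rmult_lt_reg_r with r; auto. unfold Rdiv. rewrite Rmult_assoc, Rinv_l; lra. }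
    assert (-1 < u < 1) by nra.
    split.
    + unfold P; apply injective_projections; cbn [fst snd].
      rewrite cos_minus, cos_2PI, sin_2PI, cos_acos; lra.
      rewrite sin_minus, cos_2PI, sin_2PI, sin_acos, E, Rsqr_neg, sqrt_Rsqr; lra.
    + pose proof (acos_bound_lt u); lra.
Qed.

Fixpoint ins (x : pt) (l : list pt) : list pt :=
  match l with
  | nil => x :: nil
  | y :: l' => if Rle_dec (ang x) (ang y) then x :: l else y :: ins x l'
  end.

Fixpoint isort (l : list pt) : list pt :=
  match l with nil => nil | x :: l' => ins x (isort l') end.

Lemma ins_perm x l : Permutation (ins x l) (x :: l).
Proof.
  induction l as [|a l IH]; simpl. auto.
  destruct Rle_dec. auto.
  eapply perm_trans; [apply perm_skip, IH | apply perm_swap].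
Qed.

Lemma isort_perm l : Permutation (isort l) l.
Proof.
  induction l; simpl; auto. eapply perm_trans; [apply ins_perm | apply perm_skip; auto].
Qed.

Definition Rang (x y : pt) : Prop := ang x <= ang y.

Lemma ins_hd a x l : HdRel Rang a l -> Rang a x -> HdRel Rang a (ins x l).
Proof.
  intros H Hax. destruct l as [|b l]; simpl. constructor; auto.
  destruct Rle_dec; constructor; auto. apply HdRel_inv in H; auto.
Qed.

Lemma ins_sorted x l : Sorted Rang l -> Sorted Rang (ins x l).
Proof.
  induction l as [|a l IH]; simpl; intros H.
  - repeat constructor.
  - destruct Rle_dec as [h|h].
    + constructor; auto.
    + apply Sorted_inv in H as [H1 H2]. constructor. auto.
      apply ins_hd; auto. unfold Rang; lra.
Qed.

Lemma isort_sorted l : Sorted Rang (isort l).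
Proof. induction l; simpl. constructor. apply ins_sorted; auto. Qed.

Lemma sorted_2 a b l : Sorted Rang (a :: b :: l) -> Rang a b /\ Sorted Rang (b :: l).
Proof. intros H. apply Sorted_inv in H as [H1 H2]. split; auto. apply HdRel_inv in H2; auto. Qed.

End H.

Definition concl (S : list pt) (O : pt) (r : R) : Prop :=
  exists p q, In p S /\ In q S /\ p <> q /\
    is_SED (setminus1 S p) O r /\
    exists a b, adjacent_pair S O r p a b /\
      in_open_arc O r a b p (antipode O q).

Lemma K (O : pt) (r : R) (S : list pt) (hr : 0 < r) y1 y2 y3 y4 y5 u1 u2 u3 u4 u5 :
  y1 = P O r u1 -> y2 = P O r u2 -> y3 = P O r u3 -> y4 = P O r u4 -> y5 = P O r u5 ->
  In y1 S -> In y2 S -> In y3 S -> In y4 S -> In y5 S ->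
  (forall s, In s S -> s = y1 \/ s = y2 \/ s = y3 \/ s = y4 \/ s = y5) ->
  y1 <> y2 -> y2 <> y3 -> y1 <> y3 -> y2 <> y4 -> y2 <> y5 ->
  u1 < u2 -> u2 < u3 -> u3 < u4 -> u4 < u5 -> u5 < u1 + 2*PI ->
  u3 - u1 < PI -> u4 - u3 < PI -> u1 + 2*PI - u5 < PI ->
  (PI < u4 - u1 \/ u5 - u3 < PI) -> concl S O r.
Proof.
  intros E1 E2 E3 E4 E5 I1 I2 I3 I4 I5 Hmem n12 n23 n13 n24 n25 o1 o2 o3 o4 o5 g1 g2 g3 Hc.
  subst.
  pose proof PI_RGT_0.
  assert (Hp : cross (P O r u1) (P O r u3) (P O r u2) < 0)
    by (rewrite cross_swap; pose proof (cross_pos O r hr u1 u2 u3); lra).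
  assert (H4 : 0 < cross (P O r u1) (P O r u3) (P O r u4)) by (apply cross_pos; lra).
  assert (H5 : 0 < cross (P O r u1) (P O r u3) (P O r u5)) by (apply cross_pos; lra).
  assert (Hon : forall x, In x S -> pdist x O = r).
  { intros x Hx. destruct (Hmem x Hx) as [ -> | [ -> | [ -> | [ -> | -> ] ] ] ]; apply pdist_P; lra. }
  assert (Hadj : adjacent_pair S O r (P O r u2) (P O r u1) (P O r u3)).
  { unfold adjacent_pair. repeat split; auto.
    intros s Hs [_ Harc]. destruct (Hmem s Hs) as [ -> | [ -> | [ -> | [ -> | -> ] ] ] ].
    - rewrite cross_self1 in Harc; lra.
    - reflexivity.
    - rewrite cross_self2 in Harc; lra.
    - exfalso; nra.
    - exfalso; nra. }
  assert (Hsed : is_SED (setminus1 S (P O r u2)) O r).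
  { split. split; [lra|]. intros x [Hx _]. rewrite (Hon x Hx); lra.
    intros c' r' [Hr' Henc].
    destruct Hc as [Hf|Hb].
    - apply (tri_lb O r hr u1 u3 u4 c' r'); try lra; apply Henc; split; auto.
    - apply (tri_lb O r hr u1 u3 u5 c' r'); try lra; apply Henc; split; auto. }
  destruct Hc as [Hf|Hb].
  - exists (P O r u2), (P O r u4). split; [auto|split; [auto|split; [auto|split; [exact Hsed|]]]].
    exists (P O r u1), (P O r u3). split; auto. rewrite antipode_P. split.
    apply pdist_P; lra.
    assert (0 < cross (P O r u1) (P O r (u4 - PI)) (P O r u3)) by (apply cross_pos; lra).
    rewrite cross_swap in H0. nra.
  - exists (P O r u2), (P O r u5). split; [auto|split; [auto|split; [auto|split; [exact Hsed|]]]].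
    exists (P O r u1), (P O r u3). split; auto. rewrite antipode_P. split.
    apply pdist_P; lra.
    assert (0 < cross (P O r u1) (P O r (u5 - PI)) (P O r u3)) by (apply cross_pos; lra).
    rewrite cross_swap in H0. nra.
Qed.

Lemma gapL (O : pt) (r : R) (S : list pt) (hr : 0 < r) lo hi :
  is_SED (setof S) O r ->
  (forall x y, In x S -> In y S -> x <> y -> ~ antipodal O x y) ->
  In (P O r lo) S -> In (P O r hi) S -> P O r lo <> P O r hi ->
  (forall s, In s S -> exists t, s = P O r t /\ lo <= t <= hi) -> PI < hi - lo.
Proof.
  intros HS Ha I1 I2 n Hin.
  destruct (Rtotal_order (hi - lo) PI) as [Hlt|[Heq|Hgt]]; auto.
  - exfalso. apply (arc_contra O r S hr lo (hi - lo)); auto. exists (P O r lo); auto.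
    intros s Hs. destruct (Hin s Hs) as [t [-> Ht]]. exists t; split; auto; lra.
  - exfalso. replace hi with (lo + PI) in * by lra.
    apply (Ha _ _ I1 I2 n). apply antip_P.
Qed.

Lemma pairL (O : pt) (r : R) (S : list pt) a b :
  (forall x y, In x S -> In y S -> x <> y -> ~ antipodal O x y) ->
  In (P O r a) S -> In (P O r b) S -> P O r a <> P O r b -> b - a <> PI.
Proof.
  intros Ha I1 I2 n E. replace b with (a + PI) in * by lra.
  apply (Ha _ _ I1 I2 n). apply antip_P.
Qed.

Lemma helper (x y z : R) : ~ (x < PI /\ (PI < y \/ z < PI)) -> x < PI -> y <= PI /\ PI <= z.
Proof. intros H Hx; split; apply Rnot_lt_le; intro; apply H; auto. Qed.

Lemma pd2 (O : pt) (r : R) x : pdist x O = r -> dist2 x O = r^2.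
Proof. unfold pdist; intros H; rewrite <- H, pow2_sqrt; auto. apply dist2_nonneg. Qed.

Lemma d0 x y : dist2 x y = 0 -> x = y.
Proof.
  unfold dist2; intros H. pose proof (pow2_ge_0 (fst x - fst y)). pose proof (pow2_ge_0 (snd x - snd y)).
  apply injective_projections; nra.
Qed.

Lemma nodup5 (a b c d e : pt) : NoDup (a :: b :: c :: d :: e :: nil) ->
  a <> b /\ a <> c /\ a <> d /\ a <> e /\ b <> c /\ b <> d /\ b <> e /\ c <> d /\ c <> e /\ d <> e.
Proof.
  intros H. rewrite !NoDup_cons_iff in H. simpl in H.
  repeat split; intro; subst; tauto.
Qed.

Ltac neq := first [assumption | apply not_eq_sym; assumption].

Ltac wit O r Hmem :=
  let s := fresh "s" in let Hs := fresh "Hs" in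
  intros s Hs; destruct (Hmem s Hs) as [ -> | [ -> | [ -> | [ -> | -> ] ] ] ];
  match goal with |- exists t, P O r ?a = P O r t /\ _ =>
    first [ exists a; split; [reflexivity | lra]
          | exists (a + 2*PI); split; [symmetry; apply P_per | lra] ] end.

Theorem lemma5p36 (S : list pt) (O : pt) (r : R) :
  NoDup S -> length S = 5%nat ->
  (* all points of S lie on Gamma = circle(O, r) *)
  (forall x, In x S -> pdist x O = r) ->
  (* Gamma = SEC(S) *)
  is_SED (setof S) O r ->
  (* no two points of S are antipodal *)
  (forall x y, In x S -> In y S -> x <> y -> ~ antipodal O x y) ->
  (* only the identity isometry maps S onto itself *)
  (forall f, isometry f -> maps_onto_itself f S -> forall x, f x = x) ->
  exists p q, In p S /\ In q S /\ p <> q /\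
    is_SED (setminus1 S p) O r /\
    exists a b, adjacent_pair S O r p a b /\
      in_open_arc O r a b p (antipode O q).
Proof.
  intros HND Hlen Hon HSED Hanti _.
  change (concl S O r).
  assert (Hd : forall x, In x S -> dist2 x O = r^2) by (intros; apply pd2; auto).
  pose proof (isort_perm O r S) as Hperm.
  pose proof (isort_sorted O r S) as Hsort.
  remember (isort O r S) as L eqn:EL.
  assert (HmemL : forall s, In s S <-> In s L)
    by (intros; split; apply Permutation_in; [apply Permutation_sym|]; auto).
  assert (HNDL : NoDup L) by (eapply Permutation_NoDup; [apply Permutation_sym; exact Hperm | exact HND]).
  assert (HlenL : length L = 5%nat) by (rewrite (Permutation_length Hperm); auto).
  clear EL Hperm.
  destruct L as [|y1 [|y2 [|y3 [|y4 [|y5 [|y6 l]]]]]]; simpl in HlenL; try discriminate.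
  clear HlenL.
  pose proof (nodup5 _ _ _ _ _ HNDL) as [n12 [n13 [n14 [n15 [n23 [n24 [n25 [n34 [n35 n45]]]]]]]]].
  assert (I1 : In y1 S) by (apply HmemL; simpl; tauto).
  assert (I2 : In y2 S) by (apply HmemL; simpl; tauto).
  assert (I3 : In y3 S) by (apply HmemL; simpl; tauto).
  assert (I4 : In y4 S) by (apply HmemL; simpl; tauto).
  assert (I5 : In y5 S) by (apply HmemL; simpl; tauto).
  assert (Hmem : forall s, In s S -> s = y1 \/ s = y2 \/ s = y3 \/ s = y4 \/ s = y5).
  { intros s Hs. apply HmemL in Hs. simpl in Hs.
    destruct Hs as [<-|[<-|[<-|[<-|[<-|[]]]]]]; tauto. }
  clear HmemL HNDL.
  assert (hr : 0 < r).
  { assert (0 <= r) by (rewrite <- (Hon y1 I1); apply sqrt_pos).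
    destruct (Rle_lt_or_eq_dec _ _ H) as [h|h]; auto. exfalso. subst r.
    apply n12. pose proof (Hd y1 I1). pose proof (Hd y2 I2).
    rewrite (d0 y1 O), (d0 y2 O); auto; lra. }
  destruct (sorted_2 _ _ _ _ _ Hsort) as [s12 Hs2].
  destruct (sorted_2 _ _ _ _ _ Hs2) as [s23 Hs3].
  destruct (sorted_2 _ _ _ _ _ Hs3) as [s34 Hs4].
  destruct (sorted_2 _ _ _ _ _ Hs4) as [s45 _].
  clear Hsort Hs2 Hs3 Hs4. unfold Rang in *.
  destruct (ang_spec O r hr y1 (Hd y1 I1)) as [E1 R1].
  destruct (ang_spec O r hr y2 (Hd y2 I2)) as [E2 R2].
  destruct (ang_spec O r hr y3 (Hd y3 I3)) as [E3 R3].
  destruct (ang_spec O r hr y4 (Hd y4 I4)) as [E4 R4].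
  destruct (ang_spec O r hr y5 (Hd y5 I5)) as [E5 R5].
  set (t1 := ang O r y1) in *. set (t2 := ang O r y2) in *. set (t3 := ang O r y3) in *.
  set (t4 := ang O r y4) in *. set (t5 := ang O r y5) in *.
  clearbody t1 t2 t3 t4 t5. subst y1 y2 y3 y4 y5.
  pose proof PI_RGT_0.
  assert (o1 : t1 < t2) by (destruct (Rle_lt_or_eq_dec _ _ s12) as [h|h]; [exact h | exfalso; apply n12; rewrite h; reflexivity]).
  assert (o2 : t2 < t3) by (destruct (Rle_lt_or_eq_dec _ _ s23) as [h|h]; [exact h | exfalso; apply n23; rewrite h; reflexivity]).
  assert (o3 : t3 < t4) by (destruct (Rle_lt_or_eq_dec _ _ s34) as [h|h]; [exact h | exfalso; apply n34; rewrite h; reflexivity]).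
  assert (o4 : t4 < t5) by (destruct (Rle_lt_or_eq_dec _ _ s45) as [h|h]; [exact h | exfalso; apply n45; rewrite h; reflexivity]).
  assert (o5 : t5 < t1 + 2*PI) by lra.
  assert (G1 : PI < t1 + 2*PI - t2) by
    (apply (gapL O r S hr); [auto | auto | auto | rewrite P_per; auto | rewrite P_per; neq | wit O r Hmem]).
  assert (G2 : PI < t2 + 2*PI - t3) by
    (apply (gapL O r S hr); [auto | auto | auto | rewrite P_per; auto | rewrite P_per; neq | wit O r Hmem]).
  assert (G3 : PI < t3 + 2*PI - t4) by
    (apply (gapL O r S hr); [auto | auto | auto | rewrite P_per; auto | rewrite P_per; neq | wit O r Hmem]).
  assert (G4 : PI < t4 + 2*PI - t5) by
    (apply (gapL O r S hr); [auto | auto | auto | rewrite P_per; auto | rewrite P_per; neq | wit O r Hmem]).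
  assert (G5 : PI < t5 - t1) by
    (apply (gapL O r S hr); [auto | auto | auto | auto | neq | wit O r Hmem]).
  assert (N1 : t3 - t1 <> PI) by (apply (pairL O r S); auto; neq).
  assert (N2 : t4 - t2 <> PI) by (apply (pairL O r S); auto; neq).
  assert (N3 : t5 - t3 <> PI) by (apply (pairL O r S); auto; neq).
  assert (N4 : t1 + 2*PI - t4 <> PI) by (apply (pairL O r S); rewrite ?P_per; auto; neq).
  assert (N5 : t2 + 2*PI - t5 <> PI) by (apply (pairL O r S); rewrite ?P_per; auto; neq).
  assert (Hcomb :
    (t3 - t1 < PI /\ (PI < t4 - t1 \/ t5 - t3 < PI)) \/
    (t4 - t2 < PI /\ (PI < t5 - t2 \/ t1 + 2*PI - t4 < PI)) \/
    (t5 - t3 < PI /\ (PI < t1 + 2*PI - t3 \/ t2 + 2*PI - t5 < PI)) \/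
    (t1 + 2*PI - t4 < PI /\ (PI < t2 + 2*PI - t4 \/ t3 - t1 < PI)) \/
    (t2 + 2*PI - t5 < PI /\ (PI < t3 + 2*PI - t5 \/ t4 - t2 < PI))).
  { apply NNPP; intro Hn.
    assert (Hn1 := fun h => Hn (or_introl h)).
    assert (Hn2 := fun h => Hn (or_intror (or_introl h))).
    assert (Hn3 := fun h => Hn (or_intror (or_intror (or_introl h)))).
    assert (Hn4 := fun h => Hn (or_intror (or_intror (or_intror (or_introl h))))).
    assert (Hn5 := fun h => Hn (or_intror (or_intror (or_intror (or_intror h))))).
    clear Hn.
    destruct (Rtotal_order (t3 - t1) PI) as [A1|[A1|A1]]; [pose proof (helper _ _ _ Hn1 A1) | contradiction | idtac];
    (destruct (Rtotal_order (t4 - t2) PI) as [A2|[A2|A2]]; [pose proof (helper _ _ _ Hn2 A2) | contradiction | idtac]);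
    (destruct (Rtotal_order (t5 - t3) PI) as [A3|[A3|A3]]; [pose proof (helper _ _ _ Hn3 A3) | contradiction | idtac]);
    (destruct (Rtotal_order (t1 + 2*PI - t4) PI) as [A4|[A4|A4]]; [pose proof (helper _ _ _ Hn4 A4) | contradiction | idtac]);
    (destruct (Rtotal_order (t2 + 2*PI - t5) PI) as [A5|[A5|A5]]; [pose proof (helper _ _ _ Hn5 A5) | contradiction | idtac]);
    lra. }
  destruct Hcomb as [[A B]|[[A B]|[[A B]|[[A B]|[A B]]]]].
  - apply (K O r S hr (P O r t1) (P O r t2) (P O r t3) (P O r t4) (P O r t5) t1 t2 t3 t4 t5);
      try reflexivity; try assumption; try neq; try lra.
  - apply (K O r S hr (P O r t2) (P O r t3) (P O r t4) (P O r t5) (P O r t1) t2 t3 t4 t5 (t1 + 2*PI));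
      try reflexivity; try (symmetry; apply P_per); try assumption; try neq; try lra;
      intros s Hs; specialize (Hmem s Hs); tauto.
  - apply (K O r S hr (P O r t3) (P O r t4) (P O r t5) (P O r t1) (P O r t2) t3 t4 t5 (t1 + 2*PI) (t2 + 2*PI));
      try reflexivity; try (symmetry; apply P_per); try assumption; try neq; try lra;
      intros s Hs; specialize (Hmem s Hs); tauto.
  - apply (K O r S hr (P O r t4) (P O r t5) (P O r t1) (P O r t2) (P O r t3) t4 t5 (t1 + 2*PI) (t2 + 2*PI) (t3 + 2*PI));
      try reflexivity; try (symmetry; apply P_per); try assumption; try neq; try lra;
      intros s Hs; specialize (Hmem s Hs); tauto.
  - apply (K O r S hr (P O r t5) (P O r t1) (P O r t2) (P O r t3) (P O r t4) t5 (t1 + 2*PI) (t2 + 2*PI) (t3 + 2*PI) (t4 + 2*PI));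
      try reflexivity; try (symmetry; apply P_per); try assumption; try neq; try lra;
      intros s Hs; specialize (Hmem s Hs); tauto.
Qed.
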